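(* Let $k$ be an algebraically closed field of characteristic zero and let $m\geq 1$ be an integer. There exists an irreducible polynomial $\xi_m\in k[x,y]$, unique up to multiplication by a nonzero constant, such that (1) $\xi_m$ vanishes to order $m$ at the point $t_0=(1,1)$, and (2) the Newton polygon of $\xi_m$ is the triangle with vertices $(0,0)$, $(m-1,0)$, $(m,m+1)$.
   Context: The Newton polygon of a polynomial $\sum c_{ij}x^iy^j$ is the convex hull of the exponents $(i,j)$ with $c_{ij}\neq 0$. *)

(* Defs.v *)
From HB Require Import structures.
From mathcomp Require Import all_boot all_order all_algebra.
Set Implicit Arguments. Unset Strict Implicit. Unset Printing Implicit Defensive.
Import Order.TTheory GRing.Theory Num.Theory.
Local Open Scope ring_scope.

(* Bivariate polynomials k[x,y] are represented as p : {poly {poly k}}: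
   the outer variable is y, the inner one is x, so the coefficient of
   x^i y^j in p is (p`_j)`_i. *)

Definition coefXY (k : nzRingType) (p : {poly {poly k}}) (i j : nat) : k :=
  (p`_j)`_i.

Definition shiftXY (k : comNzRingType) (p : {poly {poly k}}) (a b : k)
  : {poly {poly k}} :=
  (map_poly (fun c : {poly k} => c \Po ('X + a%:P)) p) \Po ('X + (b%:P)%:P).

Definition vanishes_atleast (k : comNzRingType) (p : {poly {poly k}})
  (a b : k) (m : nat) : Prop :=
  forall i j : nat, (i + j < m)%N -> coefXY (shiftXY p a b) i j = 0.

Definition vanishes_to_order (k : comNzRingType) (p : {poly {poly k}})
  (a b : k) (m : nat) : Prop :=
  vanishes_atleast p a b m /\ ~ vanishes_atleast p a b m.+1.

Definition irreducibleXY (k : idomainType) (p : {poly {poly k}}) : Prop :=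
  p != 0 /\ p \isn't a GRing.unit /\
  forall q r : {poly {poly k}}, p = q * r -> q \is a GRing.unit \/ r \is a GRing.unit.

Definition supportXY (k : nzRingType) (p : {poly {poly k}}) : seq (rat * rat) :=
  [seq ((ij.1)%:R, (ij.2)%:R) |
     ij <- [seq (i, j) | j <- iota 0 (size p), i <- iota 0 (size p`_j)]
     & coefXY p ij.1 ij.2 != 0].

Definition in_conv_hull (S : seq (rat * rat)) (z : rat * rat) : Prop :=
  exists w : 'I_(size S) -> rat,
    (forall i, 0 <= w i) /\ \sum_i w i = 1 /\
    \sum_i w i * (S`_i).1 = z.1 /\ \sum_i w i * (S`_i).2 = z.2.

Definition newton_polygon (k : nzRingType) (p : {poly {poly k}})
  (z : rat * rat) : Prop := in_conv_hull (supportXY p) z.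

Definition triangle_m (m : nat) (z : rat * rat) : Prop :=
  in_conv_hull [:: (0, 0); ((m.-1)%:R, 0); (m%:R, (m.+1)%:R)] z.

Definition xi_property (k : closedFieldType) (m : nat) (p : {poly {poly k}}) : Prop :=
  [/\ irreducibleXY p, vanishes_to_order p 1 1 m &
      forall z, newton_polygon p z <-> triangle_m m z].

(* Main.v *)
Require Import Defs.
From HB Require Import structures.
From mathcomp Require Import all_boot all_order all_algebra.
From mathcomp Require Import ring lra zify.
Set Implicit Arguments. Unset Strict Implicit. Unset Printing Implicit Defensive.
Import Order.TTheory GRing.Theory Num.Theory.
Local Open Scope ring_scope.

Section Basics.
Variable k : comNzRingType.
Local Notation R := {poly {poly k}}.
Local Notation cXY := (@coefXY k).

Definition xx : R := ('X)%:P.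
Definition yy : R := 'X.
Definition cc (c : k) : R := (c%:P)%:P.

Lemma coefXY_eq (p q : R) : (forall i j, cXY p i j = cXY q i j) -> p = q.
Proof. by move=> H; apply/polyP => j; apply/polyP => i; apply: H. Qed.

Lemma coefXYD (p q : R) i j : cXY (p + q) i j = cXY p i j + cXY q i j.
Proof. by rewrite /coefXY !coefD. Qed.
Lemma coefXYN (p : R) i j : cXY (- p) i j = - cXY p i j.
Proof. by rewrite /coefXY !coefN. Qed.
Lemma coefXYB (p q : R) i j : cXY (p - q) i j = cXY p i j - cXY q i j.
Proof. by rewrite /coefXY !coefB. Qed.
Lemma coefXY0 i j : cXY 0 i j = 0.
Proof. by rewrite /coefXY !coef0. Qed.
Lemma coefXYc c (p : R) i j : cXY (cc c * p) i j = c * cXY p i j.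
Proof. by rewrite /coefXY /cc coefCM coefCM. Qed.
Lemma coefXYcst c i j : cXY (cc c) i j = if (i == 0) && (j == 0) then c else 0.
Proof. rewrite /coefXY /cc coefC; case: eqP => _ /=; rewrite ?coefC ?coef0 //; by case: eqP. Qed.
Lemma coefXY1 i j : cXY 1 i j = ((i == 0) && (j == 0))%:R.
Proof. have -> : (1 : R) = cc 1 by []. rewrite coefXYcst; by case: andP. Qed.
Lemma coefXYy (p : R) i j : cXY (yy * p) i j = if j is j'.+1 then cXY p i j' else 0.
Proof. by rewrite /coefXY /yy coefXM; case: j => //=; rewrite coef0. Qed.
Lemma coefXYx (p : R) i j : cXY (xx * p) i j = if i is i'.+1 then cXY p i' j else 0.
Proof. by rewrite /coefXY /xx coefCM coefXM; case: i. Qed.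
Lemma coefXYyn n (p : R) i j : cXY (yy ^+ n * p) i j = if (n <= j)%N then cXY p i (j - n) else 0.
Proof. by rewrite /coefXY /yy coefXnM; case: ltnP => _ //; rewrite coef0. Qed.
Lemma coefXYxn n (p : R) i j : cXY (xx ^+ n * p) i j = if (n <= i)%N then cXY p (i - n) j else 0.
Proof. by rewrite /coefXY /xx -rmorphXn /= coefCM coefXnM; case: ltnP. Qed.

Lemma coefXY_sum I (r : seq I) (P : pred I) (F : I -> R) i j :
  cXY (\sum_(a <- r | P a) F a) i j = \sum_(a <- r | P a) cXY (F a) i j.
Proof. by rewrite /coefXY !coef_sum. Qed.

Lemma coefXYM (p q : R) i j : cXY (p * q) i j =
  \sum_(b < j.+1) \sum_(a < i.+1) cXY p a b * cXY q (i - a) (j - b).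
Proof.
rewrite /coefXY coefM coef_sum; apply: eq_bigr => b _; by rewrite coefM.
Qed.

Definition ordge (P : R) (n : nat) := forall i j, (i + j < n)%N -> cXY P i j = 0.

Lemma ordgeM P Q a b : ordge P a -> ordge Q b -> ordge (P * Q) (a + b).
Proof.
move=> HP HQ i j lt; rewrite coefXYM big1 // => [[b' /= hb]] _; rewrite big1 // => [[a' /= ha]] _.
have [h|h] := ltnP (a' + b') a; first by rewrite HP // mul0r.
by rewrite HQ ?mulr0 //; lia.
Qed.

Lemma ordgeD P Q n : ordge P n -> ordge Q n -> ordge (P + Q) n.
Proof. by move=> HP HQ i j h; rewrite coefXYD HP ?HQ ?addr0. Qed.
Lemma ordgeN P n : ordge P n -> ordge (- P) n.
Proof. by move=> HP i j h; rewrite coefXYN HP ?oppr0. Qed.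
Lemma ordgeB P Q n : ordge P n -> ordge Q n -> ordge (P - Q) n.
Proof. by move=> HP HQ; apply: ordgeD => //; apply: ordgeN. Qed.
Lemma ordge_le P n n' : (n' <= n)%N -> ordge P n -> ordge P n'.
Proof. by move=> h HP i j h'; apply: HP; lia. Qed.
Lemma ordge0 P : ordge P 0.
Proof. by []. Qed.
Lemma ordgeX P a n : ordge P a -> ordge (P ^+ n) (a * n).
Proof.
move=> HP; elim: n => [|n IH]; first by rewrite muln0.
by rewrite exprS mulnS; apply: ordgeM.
Qed.
Lemma ordgeMl P Q a : ordge P a -> ordge (Q * P) a.
Proof. by move=> HP; rewrite -[a]add0n; apply: ordgeM. Qed.
Lemma ordge_x : ordge xx 1.
Proof. move=> i j h; have -> : xx = xx * 1 by rewrite mulr1.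
rewrite coefXYx; case: i h => //. Qed.
Lemma ordge_y : ordge yy 1.
Proof. move=> i j h; have -> : yy = yy * 1 by rewrite mulr1.
rewrite coefXYy; case: j h => //; lia. Qed.
Lemma ordge_yM P n : ordge (yy * P) n.+1 -> ordge P n.
Proof. by move=> H i j h; have := H i j.+1; rewrite coefXYy; apply; lia. Qed.
Lemma ordge_xM P n : ordge (xx * P) n.+1 -> ordge P n.
Proof. by move=> H i j h; have := H i.+1 j; rewrite coefXYx; apply; lia. Qed.
Lemma ordge_x1M P n : ordge ((xx + 1) * P) n -> ordge P n.
Proof.
move=> H i; elim: i => [|i IH] j h.
  by have := H 0 j h; rewrite mulrDl mul1r coefXYD coefXYx add0r.
have := H i.+1 j h; rewrite mulrDl mul1r coefXYD coefXYx IH ?add0r //; lia.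
Qed.

End Basics.

Section Shift.
Variable k : comNzRingType.
Local Notation R := {poly {poly k}}.
Local Notation cXY := (@coefXY k).

Definition sh (p : R) : R := shiftXY p 1 1.

Lemma shE p : sh p = comp_poly ('X + (1%:P)%:P) (map_poly (comp_poly ('X + 1%:P)) p).
Proof. by []. Qed.

Lemma shM p q : sh (p * q) = sh p * sh q.
Proof. by rewrite !shE !rmorphM. Qed.
Lemma shD p q : sh (p + q) = sh p + sh q.
Proof. by rewrite !shE !rmorphD. Qed.
Lemma shN p : sh (- p) = - sh p.
Proof. by rewrite !shE !rmorphN. Qed.
Lemma shB p q : sh (p - q) = sh p - sh q.
Proof. by rewrite !shE !rmorphB. Qed.
Lemma sh1 : sh 1 = 1.
Proof. by rewrite !shE !rmorph1. Qed.
Lemma shX p n : sh (p ^+ n) = sh p ^+ n.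
Proof. by rewrite !shE !rmorphXn. Qed.
Lemma sh_cc c : sh (cc c) = cc c.
Proof. by rewrite shE /cc map_polyC /= comp_polyC comp_polyC. Qed.
Lemma sh_x : sh (xx k) = xx k + 1.
Proof. by rewrite shE /xx map_polyC /= comp_polyC comp_polyX rmorphD /= polyC1. Qed.
Lemma sh_y : sh (yy k) = yy k + 1.
Proof. by rewrite shE /yy map_polyX comp_polyX polyC1. Qed.

Lemma sh_coef0 p : (sh p)`_0 = p.[1] \Po ('X + 1%:P).
Proof.
rewrite -horner_coef0 shE horner_comp !hornerE /=.
rewrite -[X in _.[X]](rmorph1 (comp_poly ('X + 1%:P))) /=.
exact: horner_map.
Qed.

End Shift.

Section Xi.
Variable k : comNzRingType.
Local Notation R := {poly {poly k}}.
Local Notation cXY := (@coefXY k).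
Local Notation x := (xx k).
Local Notation y := (yy k).

Definition cxi (m i j : nat) : k :=
  if (i == m) && (j == m.+1) then (-1) ^+ m
  else if ((j <= i) && (i < m))%N then (-1) ^+ j *+ 'C(m.+1, j) else 0.

Definition xi (m : nat) : R := \poly_(j < m.+2) \poly_(i < m.+1) cxi m i j.

Lemma coefXY_xi m i j : cXY (xi m) i j = cxi m i j.
Proof.
rewrite /coefXY /xi coef_poly; case: ltnP => hj; rewrite ?coef_poly; last first.
  rewrite coef0 /cxi; case: ifP; first lia. by case: ifP => //; lia.
case: ltnP => hi //; rewrite /cxi; case: ifP; first lia. by case: ifP => //; lia.
Qed.

Lemma coefXY_A n i j : cXY ((1 - x * y) ^+ n) i j = if i == j then (-1) ^+ i *+ 'C(n, i) else 0.
Proof.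
elim: n i j => [|n IH] i j.
  rewrite expr0 coefXY1; case: i => [|i]; case: j => [|j] //=.
  by rewrite bin0n /= mulr0n; case: ifP.
rewrite exprS mulrBl mul1r -mulrA coefXYB coefXYx IH.
case: i => [|i]; rewrite ?coefXYy; case: j => [|j] //=; rewrite ?subr0 ?bin0 //.
rewrite IH eqSS; case: eqP => [->|_]; last by rewrite subr0.
by rewrite binS mulrnDr exprS mulN1r !mulNrn.
Qed.

Lemma coefXY_B n i j : cXY ((1 - y) ^+ n) i j = if i == 0 then (-1) ^+ j *+ 'C(n, j) else 0.
Proof.
elim: n i j => [|n IH] i j.
  rewrite expr0 coefXY1; case: i => [|i]; case: j => [|j] //=.

rewrite exprS mulrBl mul1r coefXYB coefXYy IH.
case: j => [|j]; rewrite ?IH; case: (i == 0) => //; rewrite ?subr0 ?bin0 ?subrr //.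
by rewrite binS mulrnDr exprS mulN1r !mulNrn.
Qed.

Ltac dest := repeat match goal with
  | H : is_true ((_ == _) && _) |- _ => case/andP: H => /eqP ? ?
  | H : is_true (_ && _) |- _ => case/andP: H => ? ?
  | H : is_true (_ == _) |- _ => move/eqP: H => ?
  end; subst.

Lemma xi_identity m : (1 - x) * xi m = (1 - x * y) ^+ m.+1 - x ^+ m * (1 - y) ^+ m.+1.
Proof.
apply: coefXY_eq => i j.
rewrite mulrBl mul1r coefXYB coefXYx coefXYB coefXY_A coefXYxn coefXY_B.
case: i => [|i] /=; rewrite !coefXY_xi /cxi; repeat (case: ifP => /= ?); dest; rewrite ?subr0 ?sub0r ?subrr //; try lia.
all: rewrite ?binn ?mulr1n ?exprS ?mulN1r ?opprK ?expr0 //.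
all: try (rewrite bin_small ?mulr0n ?oppr0 //; lia).
Qed.
End Xi.

Section Van.
Variable k : comNzRingType.
Local Notation R := {poly {poly k}}.
Local Notation cXY := (@coefXY k).
Local Notation x := (xx k).
Local Notation y := (yy k).

Lemma coef0X (p : R) n : (p ^+ n)`_0 = (p`_0) ^+ n.
Proof. elim: n => [|n IH]; first by rewrite !expr0 coefC. by rewrite !exprS coef0M IH. Qed.

Lemma ordgeX1 (P : R) n : ordge P 1 -> ordge (P ^+ n) n.
Proof. by move=> h; have := ordgeX (n:=n) h; rewrite mul1n. Qed.

Lemma sh_xi_eq m : - x * sh (xi k m) =
  (1 - (x + 1) * (y + 1)) ^+ m.+1 - (x + 1) ^+ m * (- y) ^+ m.+1.
Proof.
have := congr1 (@sh k) (xi_identity k m).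
rewrite !(shM, shB, shX, sh1, sh_x, sh_y).
have -> : 1 - (x + 1) = - x by ring.
have -> : 1 - (y + 1) = - y by ring.
by [].
Qed.

Lemma sh_xi_eq' m : - x * sh (xi k m) =
  (1 - (x + 1) * (y + 1)) ^+ m.+1 - (x + 1) ^+ m * (- y) ^+ m.+1.
Proof. exact: sh_xi_eq. Qed.

Lemma ordge_sh_xi m : ordge (sh (xi k m)) m.
Proof.
apply: ordge_xM; apply: ordge_le (leqnn _) _.
rewrite -[x * _]opprK -mulNr sh_xi_eq; apply: ordgeN; apply: ordgeB.
  apply: ordgeX1.
  have -> : 1 - (x + 1) * (y + 1) = - (x * y + x + y) by ring.
  apply/ordgeN/ordgeD; last exact: ordge_y.
  by apply: ordgeD; [apply: ordgeMl; exact: ordge_y | exact: ordge_x].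
apply: ordgeMl; apply: ordgeX1; apply: ordgeN; exact: ordge_y.
Qed.

Lemma coef_sh_xi m : cXY (sh (xi k m)) m 0 = (-1) ^+ m.
Proof.
have := congr1 (fun p => cXY p m.+1 0) (sh_xi_eq m).
rewrite mulNr coefXYN coefXYx /= coefXYB /coefXY coef0M !coef0X.
have -> : (- y)`_0 = 0 by rewrite coefN /yy coefX oppr0.
rewrite expr0n /= mulr0 coef0 subr0.
have -> : (1 - (x + 1) * (y + 1))`_0 = - 'X.
  by rewrite coefB coef0M !coefD /xx /yy coefX !coefC /=; ring.
rewrite [(- 'X) ^+ _]exprNn coefMXn ltnn subnn -horner_coef0 !hornerE => /eqP.
by rewrite eqr_oppLR exprS mulN1r opprK => /eqP ->.
Qed.
End Van.

Section Uniq.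
Variable k : idomainType.
Local Notation R := {poly {poly k}}.
Local Notation cXY := (@coefXY k).
Local Notation x := (xx k).
Local Notation y := (yy k).

Lemma coefXY_big (p : R) i j : (size p <= j)%N -> cXY p i j = 0.
Proof. by move=> h; rewrite /coefXY (nth_default _ h) coef0. Qed.

Lemma coefXY_yB1 (p1 : R) i j :
  cXY (p1 * ('X - 1)) i j = (if j is j'.+1 then cXY p1 i j' else 0) - cXY p1 i j.
Proof.
by rewrite mulrBr mulr1 coefXYB mulrC -/(yy k) coefXYy.
Qed.

Lemma ordge_zero n (p : R) :
  (forall i j, cXY p i j != 0 -> (j <= i < n)%N) -> ordge (sh p) n -> p = 0.
Proof.
elim: n p => [|n IH] p Hs Ho.
  by apply: coefXY_eq => i j; rewrite coefXY0; apply/eqP; apply: contraT => /Hs; lia.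
have Hc1 i : (p.[1])`_i = \sum_(j < size p) cXY p i j.
  by rewrite horner_coef coef_sum; apply: eq_bigr => j _; rewrite expr1n mulr1.
have Hsz : (size p.[1] <= n.+1)%N.
  apply/leq_sizeP => i hi; rewrite Hc1 big1 // => j _.
  by apply/eqP; apply: contraT => /Hs; lia.
have H1 : p.[1] = 0.
  have Hsz2 : size (p.[1] \Po ('X + 1%:P)) = size p.[1].
    by rewrite size_comp_poly2 // size_XaddC.
  suff : p.[1] \Po ('X + 1%:P) = 0 by move/eqP; rewrite -size_poly_eq0 Hsz2 size_poly_eq0 => /eqP.
  apply/eqP; rewrite -size_poly_eq0 -leqn0; apply/leq_sizeP => i _.
  have [hi|hi] := ltnP i n.+1.
    by rewrite -sh_coef0; have := Ho i 0%N; rewrite /coefXY; apply; rewrite addn0.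
  by apply: nth_default; rewrite Hsz2; apply: leq_trans hi.
have /factor_theorem [p1 Dp] : root p 1 by apply/eqP.
have Hp1a : forall j i, (n.+1 <= i)%N -> cXY p1 i j = 0.
  elim=> [|j IHj] i hi.
    have := congr1 (fun q => cXY q i 0) Dp; rewrite /= coefXY_yB1 sub0r => E.
    have -> : cXY p1 i 0 = - cXY p i 0 by rewrite E opprK.
    rewrite (_ : cXY p i 0 = 0) ?oppr0 //; apply/eqP; apply: contraT => /Hs; lia.
  have := congr1 (fun q => cXY q i j.+1) Dp; rewrite /= coefXY_yB1 IHj // sub0r => E.
  have -> : cXY p1 i j.+1 = - cXY p i j.+1 by rewrite E opprK.
  rewrite (_ : cXY p i j.+1 = 0) ?oppr0 //; apply/eqP; apply: contraT => /Hs; lia.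
have Hp1b : forall d j i, (size p1 <= j + d)%N -> (i <= j)%N -> cXY p1 i j = 0.
  elim=> [|d IHd] j i hs hij; first by apply: coefXY_big; rewrite addn0 in hs.
  have := congr1 (fun q => cXY q i j.+1) Dp; rewrite /= coefXY_yB1 (IHd j.+1) ?subr0; last 2 first.
  - by rewrite addSnnS.
  - by apply: leqW.
  move=> <-; apply/eqP; apply: contraT => /Hs; lia.
set p2 : R := \poly_(j < size p1) \poly_(i < n) cXY p1 i.+1 j.
have Dp1 : p1 = x * p2.
  apply: coefXY_eq => i j; rewrite coefXYx.
  case: i => [|i]; first by rewrite (Hp1b (size p1) j 0%N) // addnC leq_addr.
  rewrite /coefXY /p2 coef_poly; case: ltnP => hj; last by rewrite coef0 -/(coefXY p1 i.+1 j) coefXY_big.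
  rewrite coef_poly; case: ltnP => hi //.
  exact: Hp1a.
have Hs2 : forall i j, cXY p2 i j != 0 -> (j <= i < n)%N.
  move=> i j; rewrite /coefXY /p2 coef_poly; case: ltnP => hj; last by rewrite coef0 eqxx.
  rewrite coef_poly; case: ltnP => hi; last by rewrite eqxx.
  move=> h; rewrite andbT; apply: contraT; rewrite -ltnNge => hl.
  by move: h; rewrite -/(coefXY p1 i.+1 j) (Hp1b (size p1) j i.+1) ?eqxx // addnC leq_addr.
have Ho2 : ordge (sh p2) n.
  apply: ordge_x1M; apply: ordge_yM.
  move: Ho; rewrite Dp Dp1 !shM sh_x shB sh1 -polyC1 -/(yy k) sh_y.
  have -> : y + 1 - 1 = y by ring.
  suff -> : (x + 1) * sh p2 * y = y * ((x + 1) * sh p2) by [].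
  by rewrite mulrC.
by rewrite Dp Dp1 (IH p2 Hs2 Ho2) mulr0 mul0r.
Qed.

End Uniq.

Lemma mem_supportXY (k : nzRingType) (p : {poly {poly k}}) i j :
  coefXY p i j != 0 -> ((i%:R, j%:R) : rat * rat) \in supportXY p.
Proof.
move=> h; rewrite /supportXY; apply/mapP; exists (i, j) => //.
rewrite mem_filter h /=; apply/allpairsPdep; exists j, i; split => //.
  rewrite mem_iota add0n leq0n /=; apply: contraTT h; rewrite -leqNgt => hj.
  by rewrite negbK /coefXY (nth_default _ hj) coef0.
rewrite mem_iota add0n leq0n /=; apply: contraTT h; rewrite -leqNgt => hi.
by rewrite negbK /coefXY (nth_default _ hi).
Qed.

Lemma supportXY_inv (k : nzRingType) (p : {poly {poly k}}) z :
  z \in supportXY p -> exists i j : nat, z = (i%:R, j%:R) /\ coefXY p i j != 0.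
Proof.
rewrite /supportXY => /mapP [[i j]]; rewrite mem_filter /= => /andP [h _] ->.
by exists i, j.
Qed.

Lemma mem_hull (S : seq (rat * rat)) z : z \in S -> in_conv_hull S z.
Proof.
move=> zS; have zS' : (index z S < size S)%N by rewrite index_mem.
set i0 : 'I_(size S) := Ordinal zS'.
have Hi0 : S`_i0 = z by rewrite /= nth_index.
exists (fun i => if i == i0 then 1 else 0); repeat split.
- by move=> i; case: ifP.
- by rewrite (bigD1 i0) //= eqxx big1 ?addr0 // => i /negbTE ->.
- by rewrite (bigD1 i0) //= eqxx big1 ?addr0 ?mul1r ?Hi0 // => i /negbTE ->; rewrite mul0r.
- by rewrite (bigD1 i0) //= eqxx big1 ?addr0 ?mul1r ?Hi0 // => i /negbTE ->; rewrite mul0r.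
Qed.

Lemma hull_trans (S T : seq (rat * rat)) z :
  (forall s, s \in S -> in_conv_hull T s) -> in_conv_hull S z -> in_conv_hull T z.
Proof.
move=> HST [w [w0 [w1 [wx wy]]]].
have /fin_all_exists [l Hl] : forall i : 'I_(size S), exists l : 'I_(size T) -> rat,
    (forall t, 0 <= l t) /\ \sum_t l t = 1 /\
    \sum_t l t * (T`_t).1 = (S`_i).1 /\ \sum_t l t * (T`_t).2 = (S`_i).2.
  by move=> i; apply: HST; apply: mem_nth.
exists (fun t => \sum_i w i * l i t); repeat split.
- by move=> t; apply: sumr_ge0 => i _; apply: mulr_ge0 => //; case: (Hl i) => ->.
- rewrite exchange_big /= -w1; apply: eq_bigr => i _.
  by rewrite -mulr_sumr; case: (Hl i) => _ [-> _]; rewrite mulr1.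
- rewrite -wx; under eq_bigr do rewrite mulr_suml.
  rewrite exchange_big /=; apply: eq_bigr => i _.
  by rewrite -(proj1 (proj2 (proj2 (Hl i)))) mulr_sumr; apply: eq_bigr => t _; rewrite mulrA.
- rewrite -wy; under eq_bigr do rewrite mulr_suml.
  rewrite exchange_big /=; apply: eq_bigr => i _.
  by rewrite -(proj2 (proj2 (proj2 (Hl i)))) mulr_sumr; apply: eq_bigr => t _; rewrite mulrA.
Qed.

Lemma sum3 (f : 'I_3 -> rat) : \sum_i f i = f ord0 + f (lift ord0 ord0) + f ord_max.
Proof. rewrite !big_ord_recl big_ord0 addr0 addrA; congr (_ + _ + f _); exact: val_inj. Qed.

Lemma predn_rat (m : nat) : (0 < m)%N -> (m.-1)%:R = (m%:R - 1 : rat).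
Proof. by move=> hm; rewrite -{2}(prednK hm) -natr1 addrK. Qed.

Lemma triangle_tri m (w : 'I_3 -> rat) :
  (0 < m)%N -> (forall i, 0 <= w i) -> \sum_i w i = 1 ->
  triangle_m m (w (lift ord0 ord0) * (m%:R - 1) + w ord_max * m%:R, w ord_max * (m%:R + 1)).
Proof.
move=> hm w0 w1; exists w; repeat split => //.
  by rewrite sum3 /= predn_rat //; ring.
by rewrite sum3 /= -natr1; ring.
Qed.

Lemma triangle_pts m i j : (0 < m)%N ->
  ((j <= i < m)%N \/ (i = m /\ j = m.+1)) -> triangle_m m (i%:R, j%:R).
Proof.
move=> hm [/andP [hji him] | [-> ->]]; last by apply: mem_hull; rewrite !inE eqxx !orbT.
have [i0|i0] := posnP i.
  have -> : j = 0%N by lia.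
  rewrite i0.
  by apply: mem_hull; rewrite !inE eqxx.
have m2 : (2 <= m)%N by lia.
set M : rat := m%:R; set I : rat := i%:R; set J : rat := j%:R.
have HM : 2 <= M by rewrite /M (ler_nat _ 2 m).
have HJI : J <= I by rewrite ler_nat.
have HIM : I <= M - 1 by rewrite /I /M -predn_rat // ler_nat; lia.
have HJ : 0 <= J by rewrite /J.
set b := J / (M + 1); set a := (I - M * b) / (M - 1).
have Hb : b * (M + 1) = J by rewrite /b divfK //; lra.
have Ha : a * (M - 1) = I - M * b by rewrite /a divfK //; lra.
have b0 : 0 <= b by rewrite /b divr_ge0 //; lra.
have b1 : b <= 1 by rewrite /b ler_pdivrMr; lra.
have Mb : M * b = J - b by rewrite -Hb; ring.
have a0 : 0 <= a by rewrite /a divr_ge0 //; lra.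
have a1 : a <= 1 - b.
  by rewrite /a ler_pdivrMr; lra.
pose w (t : 'I_3) : rat := [:: 1 - a - b; a; b]`_t.
have := @triangle_tri m w hm; rewrite /w /=.
have -> : a * (M - 1) + b * M = I by lra.
have -> : b * (M + 1) = J by [].
apply; last by rewrite sum3 /=; ring.
move=> t; case: t => [[|[|[|t]]] ht] //=; lra.
Qed.

Lemma triangle_inv m i j : (0 < m)%N -> triangle_m m (i%:R, j%:R) ->
  (j <= i < m)%N \/ (i = m /\ j = m.+1).
Proof.
move=> hm [w [w0 [w1 [wx wy]]]].
rewrite sum3 in w1; rewrite sum3 /= predn_rat // in wx; rewrite sum3 /= in wy.
set w1_ := w (lift ord0 ord0) in w1 wx wy; set w2 := w ord_max in w1 wx wy.
set w0_ := w ord0 in w1 wx wy.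
have h0 : 0 <= w0_ := w0 _. have h1 : 0 <= w1_ := w0 _. have h2 : 0 <= w2 := w0 _.
set M : rat := m%:R in wx wy; have HM : 1 <= M by rewrite /M ler1n.
rewrite -natr1 -/M in wy.
have wy' : w2 * (M + 1) = j%:R by rewrite -wy; ring.
have wx' : w1_ * (M - 1) + w2 * M = i%:R by rewrite -wx; ring.
have Jle : (j%:R : rat) <= M + 1 by nra.
have [jm|jm] := eqVneq j m.+1.
  right; split => //.
  have e2 : w2 = 1 by move: wy'; rewrite jm -natr1 -/M; nra.
  have e1 : w1_ = 0 by lra.
  apply/eqP; rewrite -(eqr_nat rat) -wx'; apply/eqP; rewrite e1 e2; ring.
have jm' : (j <= m)%N.
  have : (j <= m.+1)%N by rewrite -(ler_nat rat) -natr1 -/M.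
  by rewrite leq_eqVlt (negbTE jm) /= ltnS.
have HJ : (j%:R : rat) <= M by rewrite ler_nat.
left; apply/andP; split.
  have : (m * j <= (m.+1) * i)%N.
    rewrite -(ler_nat rat) !natrM -natr1 -/M.
    rewrite -wy' -wx'.
    have -> : (M + 1) * (w1_ * (M - 1) + w2 * M) = M * (w2 * (M + 1)) + w1_ * ((M - 1) * (M + 1)) by ring.
    have : 0 <= w1_ * ((M - 1) * (M + 1)) by apply: mulr_ge0 => //; apply: mulr_ge0; lra.
    lra.
  nia.
have w2lt : w2 < 1.
  have : w2 * (M + 1) < 1 * (M + 1) by lra.
  by rewrite ltr_pM2r //; lra.
have p0 : 0 <= w0_ * (M - 1) by apply: mulr_ge0; lra.
have e1 : w1_ = 1 - w0_ - w2 by lra.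
rewrite -(ltr_nat rat) -wx' -/M e1.
have -> : (1 - w0_ - w2) * (M - 1) + w2 * M = M - 1 + w2 - w0_ * (M - 1) by ring.
lra.
Qed.

Lemma seq_min (I : eqType) (J : seq I) (N : I -> nat) : J != [::] ->
  exists2 j0, j0 \in J & forall j, j \in J -> (N j0 <= N j)%N.
Proof.
elim: J => [//|a J IH] _.
have [->|/IH [j0 j0J H]] := eqVneq J [::].
  by exists a; rewrite ?inE ?eqxx // => j; rewrite inE => /eqP ->.
have [le|lt] := leqP (N a) (N j0).
  exists a; first by rewrite inE eqxx.
  by move=> j; rewrite inE => /orP [/eqP ->|/H]; [|apply: leq_trans].
exists j0; first by rewrite inE j0J orbT.
by move=> j; rewrite inE => /orP [/eqP ->|/H //]; apply: ltnW.
Qed.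

Lemma sum_monos_neq0 (K : idomainType) (I : eqType) (J : seq I) (H : I -> {poly K}) (N : I -> nat) :
  uniq J -> J != [::] -> {in J &, injective N} -> (forall j, j \in J -> (H j).[0] != 0) ->
  \sum_(j <- J) H j * 'X^(N j) != 0.
Proof.
move=> uJ nJ iN HH; have [j0 j0J minj0] := seq_min N nJ.
have -> : \sum_(j <- J) H j * 'X^(N j) = 'X^(N j0) * \sum_(j <- J) H j * 'X^(N j - N j0).
  rewrite mulr_sumr; apply: eq_big_seq => j jJ.
  by rewrite mulrCA -exprD subnKC // minj0.
rewrite mulf_neq0 ?expf_neq0 ?polyX_eq0 //.
apply/negP => /eqP /(congr1 (horner^~ 0)); rewrite horner_sum hornerC.
rewrite (bigD1_seq j0) //= subnn expr0 mulr1 big1_seq ?addr0.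
  by move/eqP; rewrite (negbTE (HH _ j0J)).
move=> j /andP [nj jJ]; rewrite hornerM hornerXn expr0n.
case: eqP => [e|]; last by rewrite mulr0.
have : N j = N j0 by have := minj0 j jJ; lia.
by move/iN => /(_ jJ j0J) je; rewrite je eqxx in nj.
Qed.
Lemma inj_aux m a1 a2 j1 j2 : (j1 <= m -> j2 <= m ->
  m.+1 * a1 + m * (m - j1) = m.+1 * a2 + m * (m - j2) -> j1 = j2)%N.
Proof.
move=> h1 h2 e.
have e' : (m.+1 * (a1 + (m - j1)) + j1 = m.+1 * (a2 + (m - j2)) + j2)%N by nia.
move: e'; set A := (a1 + _)%N; set B := (a2 + _)%N => e'.
case: (ltngtP A B) => l.
- have : (m.+1 * A.+1 <= m.+1 * B)%N := leq_mul (leqnn _) l. rewrite mulnS. lia.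
- have : (m.+1 * B.+1 <= m.+1 * A)%N := leq_mul (leqnn _) l. rewrite mulnS. lia.
- rewrite l in e'. lia.
Qed.

Lemma fld_aux (K : fieldType) (U1 U2 A B : K) : U2 != 0 ->
  U1 * U2 * (A * (B / U2)) = A * B * U1.
Proof. by move=> h; field. Qed.

Section Ev.
Variable k : fieldType.
Variable m : nat.
Hypothesis hm : (0 < m)%N.
Local Notation R := {poly {poly k}}.
Local Notation F := {fraction {poly k}}.
Local Notation x := (xx k).
Local Notation y := (yy k).
Local Notation tofrac := (@FracField.tofrac {poly k}).
Local Notation "a %:F" := (tofrac a) (format "a %:F").

Definition Sm : {poly k} := \sum_(i < m) 'X^i.
Definition tt : F := ('X : {poly k})%:F.
Definition uu : F := tt ^+ m.
Definition ss : F := Sm%:F.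
Definition Y0 : F := - ss / uu.
Local Notation gg := (tofrac \o comp_poly ('X ^+ m.+1)).

Definition ev (q : R) : F := (map_poly gg q).[Y0].

Lemma evM p q : ev (p * q) = ev p * ev q.
Proof. by rewrite /ev rmorphM hornerM. Qed.
Lemma evB p q : ev (p - q) = ev p - ev q.
Proof. by rewrite /ev rmorphB hornerD hornerN. Qed.
Lemma ev1 : ev 1 = 1.
Proof. by rewrite /ev rmorph1 hornerC. Qed.
Lemma evX p n : ev (p ^+ n) = ev p ^+ n.
Proof. by rewrite /ev rmorphXn horner_exp. Qed.
Lemma ev_x : ev x = tt ^+ m.+1.
Proof. by rewrite /ev /xx map_polyC hornerC /= comp_polyX /tt rmorphXn. Qed.
Lemma ev_y : ev y = Y0.
Proof. by rewrite /ev /yy map_polyX hornerX. Qed.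

Lemma Sm_rel : 'X^m + Sm = 1 + 'X * Sm.
Proof.
rewrite /Sm mulr_sumr.
under [X in _ = 1 + X]eq_bigr do rewrite -exprS.
transitivity (\sum_(i < m.+1) ('X : {poly k}) ^+ i).
  by rewrite big_ord_recr /= addrC.
by rewrite big_ord_recl /= expr0.
Qed.

Lemma tt_neq0 : tt != 0.
Proof. by rewrite /tt tofrac_eq0 polyX_eq0. Qed.
Lemma uu_neq0 : uu != 0.
Proof. by rewrite /uu expf_neq0 // tt_neq0. Qed.

Lemma ev_xi : ev (xi k m) = 0.
Proof.
have := congr1 ev (xi_identity k m).
rewrite !(evM, evB, evX, ev1, ev_x, ev_y).
have rel : uu + ss = 1 + tt * ss.
  by rewrite /uu /ss /tt -rmorphXn -rmorphM -(rmorph1 tofrac) -!rmorphD Sm_rel.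
have e1 : 1 - tt ^+ m.+1 * Y0 = 1 + tt * ss.
  by rewrite /Y0 exprS -/uu -mulrA [uu * _]mulrC divfK ?uu_neq0 // mulrN opprK.
have e2 : (tt ^+ m.+1) ^+ m * (1 - Y0) ^+ m.+1 = (1 + tt * ss) ^+ m.+1.
  have -> : 1 - Y0 = (1 + tt * ss) / uu.
    apply: (mulIf uu_neq0); rewrite divfK ?uu_neq0 // mulrBl mul1r /Y0 divfK ?uu_neq0 //.
    by rewrite opprK rel.
  rewrite -exprM mulnC exprM -/uu expr_div_n.
  by rewrite mulrC divfK // expf_neq0 // uu_neq0.
rewrite e1 e2 subrr => /eqP; rewrite mulf_eq0 => /orP [|/eqP //].
rewrite subr_eq0 /tt -rmorphXn -(rmorph1 tofrac) tofrac_eq => /eqP /(congr1 (fun p : {poly k} => p`_0)).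
by rewrite coef1 coefXn /= => /eqP; rewrite oner_eq0.
Qed.

Lemma Sm0 : Sm.[0] = 1.
Proof.
rewrite /Sm horner_sum (bigD1 (Ordinal hm)) //= expr0 hornerC big1 ?addr0 // => i.
by rewrite -val_eqE /= hornerXn expr0n => /negbTE ->.
Qed.

Lemma ev_sum (q : R) : (size q <= m.+1)%N ->
  ev q = \sum_(j < m.+1) (q`_j \Po 'X^(m.+1))%:F * Y0 ^+ j.
Proof.
move=> hs; rewrite /ev (horner_coef_wide _ (leq_trans (size_poly _ _) hs)).
by apply: eq_bigr => j _; rewrite coef_map.
Qed.

Definition PP (q : R) : {poly k} :=
  \sum_(j < m.+1) (q`_j \Po 'X^(m.+1)) * (- Sm) ^+ j * ('X^m) ^+ (m - j).

Lemma ev_PP (q : R) : (size q <= m.+1)%N -> uu ^+ m * ev q = (PP q)%:F.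
Proof.
move=> hs; rewrite ev_sum // mulr_sumr /PP rmorph_sum; apply: eq_bigr => [[j hj]] _ /=.
rewrite !rmorphM !rmorphXn rmorphN /= -/ss -/uu.
have hj' : (j <= m)%N by [].
rewrite /Y0 expr_div_n -{1}(subnK hj') exprD.
apply: fld_aux; exact: expf_neq0 uu_neq0.
Qed.

Lemma ev_small (q : R) : (size q <= m.+1)%N -> ev q = 0 -> q = 0.
Proof.
move=> hs he.
have HP : PP q = 0.
  by apply/eqP; rewrite -tofrac_eq0 -ev_PP // he mulr0.
apply/eqP; apply: contraT => qn0.
pose a j := sval (multiplicity_XsubC q`_j 0).
pose G j := q`_j %/ ('X - 0%:P) ^+ (a j).
have hG : forall j, q`_j != 0 -> q`_j = G j * 'X^(a j) /\ (G j).[0] != 0.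
  move=> j qj; rewrite /G /a; case: multiplicity_XsubC => a' /= [G' hr e].
  rewrite polyC0 subr0 in e *; rewrite qj /= in hr.
  have eG : q`_j %/ 'X^a' = G' by rewrite e mulpK // expf_neq0 // polyX_eq0.
  by rewrite eG; split.
pose T j := (q`_j \Po 'X^(m.+1)) * (- Sm) ^+ j * ('X^m) ^+ (m - j).
pose J := [seq j <- iota 0 m.+1 | q`_j != 0].
pose H j := (G j \Po 'X^(m.+1)) * (- Sm) ^+ j.
pose N j := ((m.+1) * a j + m * (m - j))%N.
have E1 : PP q = \sum_(j <- J) T j.
  rewrite /PP big_filter [in RHS]big_rmcond; last first.
    by move=> j /negPn /eqP qj0; rewrite /T qj0 comp_poly0 !mul0r.
  by rewrite -(big_mkord xpredT T).
have E2 : \sum_(j <- J) T j = \sum_(j <- J) H j * 'X^(N j).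
  apply: eq_big_seq => j; rewrite mem_filter => /andP [qj _].
  have [e _] := hG j qj.
  rewrite /T /H /N e comp_polyM rmorphXn /= comp_polyX -!exprM.
  by rewrite exprD; ring.
have : \sum_(j <- J) H j * 'X^(N j) != 0.
  apply: sum_monos_neq0.
  - by rewrite filter_uniq // iota_uniq.
  - apply/eqP => /(congr1 (fun s => (size q).-1 \in s)).
    rewrite mem_filter mem_iota /= -lead_coefE lead_coef_eq0 qn0 /=.
    rewrite in_nil add0n; move: hs; case: (size q) => //= n hn; by rewrite hn.
  - move=> j1 j2; rewrite !mem_filter !mem_iota /= => /andP [_ h1] /andP [_ h2].
    by rewrite /N => e; apply: (inj_aux _ _ e); rewrite -ltnS.
  - move=> j; rewrite mem_filter => /andP [qj _]; have [_ g0] := hG j qj.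
    rewrite /H hornerM horner_comp hornerXn expr0n /= horner_exp hornerN Sm0.
    by rewrite mulf_neq0 // expf_neq0 // oppr_eq0 oner_eq0.
by rewrite -E2 -E1 HP eqxx.
Qed.

End Ev.

Section Irr.
Variable k : closedFieldType.
Variable m : nat.
Hypothesis hm : (0 < m)%N.
Local Notation R := {poly {poly k}}.
Local Notation Xi := (xi k m).

Lemma xi_coef j : Xi`_j = \poly_(i < m.+1) cxi k m i j.
Proof.
apply/polyP => i; rewrite -/(coefXY Xi i j) coefXY_xi coef_poly.
case: ltnP => // hi; rewrite /cxi; case: ifP; first lia.
by case: ifP => //; lia.
Qed.

Lemma xi_top_eval z : (Xi`_m.+1).[z] = (-1) ^+ m * z ^+ m.
Proof.
rewrite xi_coef horner_poly big_ord_recr /= big1 ?add0r.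
  by rewrite /cxi !eqxx.
move=> [i hi] _ /=; rewrite /cxi; case: ifP; first lia.
by case: ifP; [lia | rewrite mul0r].
Qed.

Lemma xi_bot_eval : (Xi`_0).[0] = 1.
Proof.
rewrite horner_coef0 xi_coef coef_poly /= /cxi.
have -> : (0%N == m) = false by lia.
by rewrite /= hm expr0 bin0.
Qed.

Lemma size_xi : size Xi = m.+2.
Proof.
apply/eqP; rewrite eqn_leq size_poly /= ltnNge; apply/negP => h.
have := nth_default 0 h; rewrite -/(Xi`_m.+1).
move/(congr1 (horner^~ 1)); rewrite xi_top_eval expr1n mulr1 hornerC.
by move/eqP; rewrite signr_eq0.
Qed.

Lemma xi_neq0 : Xi != 0.
Proof. by rewrite -size_poly_eq0 size_xi. Qed.

Lemma half_irr (q r : R) : Xi = q * r -> ev m q = 0 -> r \is a GRing.unit.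
Proof.
move=> e hq.
have qn0 : q != 0 by apply: contraNneq xi_neq0 => q0; rewrite e q0 mul0r.
have rn0 : r != 0 by apply: contraNneq xi_neq0 => r0; rewrite e r0 mulr0.
have sq : (m.+2 <= size q)%N.
  rewrite ltnNge; apply/negP => hs; move/eqP: qn0; apply; exact: (ev_small hm hs hq).
have sr : size r = 1%N.
  have := size_xi; rewrite e size_mul // -subn1 => h.
  have : (0 < size r)%N by rewrite size_poly_gt0.
  move: sq h; clear; move: (size q) (size r) => a b; lia.
move/eqP: sr => /size_poly1P [r0 r0n0 er].
have hc : forall j, Xi`_j = q`_j * r0 by move=> j; rewrite e er coefMC.
have sr0 : size r0 = 1%N.
  apply/eqP; apply: contraT => /closed_rootP [z /eqP rz].
  have z0 : z = 0.
    have := xi_top_eval z; rewrite hc hornerM rz mulr0 => /esym /eqP.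
    by rewrite mulf_eq0 signr_eq0 /= expf_eq0 => /andP [_ /eqP].
  have := xi_bot_eval; rewrite hc hornerM -z0 rz mulr0 => /eqP.
  by rewrite eq_sym oner_eq0.
rewrite er poly_unitE size_polyC r0n0 /= coefC /= poly_unitE sr0 /=.
by rewrite unitfE; move: r0n0; rewrite -lead_coef_eq0 /lead_coef sr0.
Qed.

Lemma xi_irreducible : irreducibleXY Xi.
Proof.
split; first exact: xi_neq0.
split; first by rewrite poly_unitE size_xi.
move=> q r e.
have := ev_xi k m; rewrite e evM => /eqP; rewrite mulf_eq0 => /orP [/eqP hq|/eqP hr].
  by right; apply: half_irr e hq.
by left; apply: (@half_irr r q) => //; rewrite mulrC.
Qed.

End Irr.

Lemma cxi_region (k : comNzRingType) m i j : cxi k m i j != 0 ->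
  (j <= i < m)%N \/ (i = m /\ j = m.+1).
Proof.
rewrite /cxi; case: ifP => [/andP [/eqP -> /eqP ->] _|_]; first by right.
by case: ifP => [h _|_]; [left | rewrite eqxx].
Qed.

Lemma xi_newton (k : closedFieldType) m (hm : (0 < m)%N) z :
  newton_polygon (xi k m) z <-> triangle_m m z.
Proof.
split.
  apply: hull_trans => s /supportXY_inv [i [j [-> hc]]].
  apply: triangle_pts => //; apply: (@cxi_region k); by move: hc; rewrite coefXY_xi.
rewrite /triangle_m /newton_polygon; apply: hull_trans => s; rewrite !inE => /orP [/eqP ->|/orP [/eqP ->|/eqP ->]];
  apply: mem_hull.
- have := @mem_supportXY _ (xi k m) 0 0; rewrite coefXY_xi /cxi.
  have -> : (0%N == m) = false by lia.
  by rewrite /= hm expr0 bin0 oner_eq0; apply.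
- have := @mem_supportXY _ (xi k m) m.-1 0; rewrite coefXY_xi /cxi.
  have -> : (m.-1 == m) = false by lia.
  have -> : (m.-1 < m)%N by lia.
  by rewrite /= expr0 bin0 oner_eq0; apply.
- have := @mem_supportXY _ (xi k m) m m.+1; rewrite coefXY_xi /cxi !eqxx /= signr_eq0.
  by apply.
Qed.

Lemma xi_prop (k : closedFieldType) m (hm : (0 < m)%N) : xi_property m (xi k m).
Proof.
split; first exact: xi_irreducible.
  split; first exact: ordge_sh_xi.
  move=> h; have := h m 0%N; rewrite addn0 ltnSn => /(_ isT).
  rewrite -/(sh (xi k m)) coef_sh_xi => /eqP; by rewrite signr_eq0.
exact: xi_newton.
Qed.

Theorem theorem1p1 (k : closedFieldType) (hchar : [pchar k] =i pred0)
  (m : nat) (hm : (1 <= m)%N) :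
  exists xi : {poly {poly k}},
    xi_property m xi /\
    forall q : {poly {poly k}}, xi_property m q ->
      exists c : k, c != 0 /\ q = (c%:P)%:P * xi.
Proof.
exists (xi k m); split; first exact: xi_prop.
move=> q [[qn0 _] [van _] newt].
have Hq : forall i j, coefXY q i j != 0 -> (j <= i < m)%N \/ (i = m /\ j = m.+1).
  move=> i j hc; apply: triangle_inv => //; apply/newt; apply: mem_hull.
  exact: mem_supportXY.
pose c := coefXY q m m.+1 * (-1) ^+ m.
pose p := q - cc c * xi k m.
have Hs : forall i j, coefXY p i j != 0 -> (j <= i < m)%N.
  move=> i j; rewrite /p coefXYB coefXYc coefXY_xi => h.
  case: (boolP ((i == m) && (j == m.+1))) => [/andP [/eqP ei /eqP ej]|nv].
    move: h; rewrite ei ej /c /cxi !eqxx /= -mulrA -expr2 sqrr_sign mulr1 subrr.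
    by rewrite eqxx.
  have : (coefXY q i j != 0) || (cxi k m i j != 0).
    apply: contraNT h; rewrite negb_or !negbK => /andP [/eqP -> /eqP ->].
    by rewrite mulr0 subrr.
  case/orP => [/Hq|/(@cxi_region k)] [//|[ei ej]]; by rewrite ei ej !eqxx in nv.
have Ho : ordge (sh p) m.
  rewrite /p shB shM sh_cc; apply: ordgeB; first exact: van.
  by apply: ordgeMl; exact: ordge_sh_xi.
have p0 := ordge_zero Hs Ho.
exists c; split.
  apply: contraNneq qn0 => c0; move/eqP: (p0); rewrite /p c0 subr_eq0.
  have -> : cc 0 = 0 :> {poly {poly k}} by rewrite /cc !polyC0.
  by rewrite mul0r.
by move/eqP: p0; rewrite subr_eq0 => /eqP.
Qed.
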